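(* Let $R$ be an Armendariz ring. Then the polynomial ring $R[x]$ is a generalized right Baer ring if and only if $R$ is a generalized right Baer ring.
   Context: All rings are associative with identity. For a nonempty subset $X$ of a ring $R$, $r_R(X)=\{a\in R : xa=0 \text{ for all } x\in X\}$, and for a positive integer $n$, $X^n$ denotes the set of all products $a_1\cdots a_n$ with $a_i\in X$. A ring $R$ is generalized right Baer if for every nonempty subset $X$ of $R$ there exist a positive integer $n$ (depending on $X$) and an idempotent $e\in R$ with $r_R(X^n)=eR$. A ring $R$ is Armendariz if whenever polynomials $f(x)=\sum_{i=0}^m a_ix^i$ and $g(x)=\sum_{j=0}^n b_jx^j$ in $R[x]$ satisfy $f(x)g(x)=0$, then $a_ib_j=0$ for all $i,j$. *)

(* Defs.v *)
From mathcomp Require Import all_boot all_algebra.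
Set Implicit Arguments. Unset Strict Implicit. Unset Printing Implicit Defensive.
Import GRing.Theory.
Local Open Scope ring_scope.

Definition right_ann (R : nzRingType) (X : R -> Prop) : R -> Prop :=
  fun a => forall x, X x -> x * a = 0.

Definition set_pow (R : nzRingType) (X : R -> Prop) (n : nat) : R -> Prop :=
  fun y => exists s : seq R,
    [/\ size s = n, (forall a, a \in s -> X a) & y = \prod_(a <- s) a].

Definition gen_right_Baer (R : nzRingType) : Prop :=
  forall X : R -> Prop, (exists x, X x) ->
    exists n : nat, (0 < n)%N /\
      exists e : R, e * e = e /\
        forall a, right_ann (set_pow X n) a <-> exists b, a = e * b.

Definition armendariz (R : nzRingType) : Prop :=
  forall f g : {poly R}, f * g = 0 -> forall i j : nat, f`_i * g`_j = 0.

(* Main.v *)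
Require Import Defs.
From mathcomp Require Import all_boot all_algebra.
Local Open Scope ring_scope.
Import GRing.Theory.
Set Implicit Arguments. Unset Strict Implicit.

Section Aux.
Variable R : nzRingType.

Fixpoint crel (s : seq R) (fs : seq {poly R}) : Prop :=
  match s, fs with
  | [::], [::] => True
  | a :: s', f :: fs' => (exists i, a = f`_i) /\ crel s' fs'
  | _, _ => False
  end.

Lemma crel_size s fs : crel s fs -> size s = size fs.
Proof.
elim: s fs => [|a s IH] [|f fs] //= [_ H]; by rewrite (IH _ H).
Qed.

Lemma crel_rcons s a fs f :
  crel (rcons s a) (rcons fs f) <-> crel s fs /\ exists i, a = f`_i.
Proof.
elim: s fs => [|b s IH] [|g fs] /=.
- tauto.
- case: fs => [|? ?] /=; split=> //; by case.
- case: s {IH} => [|? ?] /=; split=> //; by case.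
- have := IH fs; tauto.
Qed.

Lemma crel_lastP s fs f : crel s (rcons fs f) ->
  exists s0 a, s = rcons s0 a.
Proof.
case/lastP: s => [|s0 a]; last by eauto.
by case: fs.
Qed.

Lemma crel_mem s fs a : crel s fs -> a \in s -> exists2 f, f \in fs & exists i, a = f`_i.
Proof.
elim: s fs => [|b s IH] [|f fs] //= [Hb H]; rewrite inE => /orP [/eqP ->|Ha].
- exists f; first by rewrite inE eqxx. done.
- have [g Hg Hi] := IH _ H Ha; exists g => //; by rewrite inE Hg orbT.
Qed.

Lemma crel_build (Y : {poly R} -> Prop) s :
  (forall a, a \in s -> exists f i, Y f /\ a = f`_i) ->
  exists fs, crel s fs /\ forall f, f \in fs -> Y f.
Proof.
elim: s => [|a s IH] H; first by exists [::].
have [fs [H1 H2]] : exists fs, crel s fs /\ forall f, f \in fs -> Y f.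
  by apply: IH => b Hb; apply: H; rewrite inE Hb orbT.
have [f [i [Yf ->]]] := H a (mem_head a s).
exists (f :: fs); split => /=; first by split; eauto.
by move=> g; rewrite inE => /orP [/eqP ->|]; auto.
Qed.

Lemma prod_rcons (T : nzRingType) (s : seq T) a :
  \prod_(x <- rcons s a) x = (\prod_(x <- s) x) * a.
Proof. by rewrite -cats1 big_cat big_seq1. Qed.

Lemma poly_mulC_eq0 (p : {poly R}) c :
  (forall k, p`_k * c = 0) -> p * c%:P = 0.
Proof. by move=> H; apply/polyP => k; rewrite coefMC H coef0. Qed.

Lemma lemA : armendariz R -> forall fs g, (\prod_(f <- fs) f) * g = 0 ->
  forall s, crel s fs -> forall j, (\prod_(a <- s) a) * g`_j = 0.
Proof.
move=> Ha fs; elim/last_ind: fs => [|fs f IH] g Hg s Hs j.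
  case: s Hs => // _; rewrite big_nil mul1r in Hg.
  by rewrite big_nil Hg coef0 mulr0.
have [s0 [a Es]] := crel_lastP Hs; subst s.
move/crel_rcons: Hs => [Hs [i ->]].
rewrite prod_rcons in Hg; rewrite prod_rcons.
have H1 : (\prod_(x <- fs) x) * f * (g`_j)%:P = 0.
  by apply: poly_mulC_eq0 => k; apply: (Ha _ _ Hg).
rewrite -mulrA in H1.
have H2 : (\prod_(x <- fs) x) * (f`_i * g`_j)%:P = 0.
  apply: poly_mulC_eq0 => k.
  have := Ha _ _ H1 k i; by rewrite coefMC.
have := IH _ H2 _ Hs 0%N; by rewrite coefC /= mulrA.
Qed.

Lemma lemQ fs c : (forall s, crel s fs -> (\prod_(a <- s) a) * c = 0) ->
  (\prod_(f <- fs) f) * c%:P = 0.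
Proof.
elim/last_ind: fs c => [|fs f IH] c H.
  have := H [::] I; rewrite big_nil mul1r => ->; by rewrite big_nil mul1r polyC0.
rewrite prod_rcons -mulrA.
have -> : f * c%:P = \sum_(i < size f) ((f`_i * c)%:P * 'X^i).
  rewrite -[f in LHS]coefK poly_def mulr_suml; apply: eq_bigr => i _.
  by rewrite -mul_polyC -mulrA -commr_polyXn mulrA -polyCM.
rewrite mulr_sumr big1 // => i _.
rewrite mulrA IH ?mul0r // => s Hs.
rewrite mulrA -prod_rcons; apply: H; apply/crel_rcons; split; eauto.
Qed.

Lemma prod_polyC (s : seq R) :
  \prod_(a <- s) (a%:P : {poly R}) = (\prod_(a <- s) a)%:P.
Proof. by rewrite rmorph_prod. Qed.

End Aux.

Theorem corollary3p12 (R : nzRingType) :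
  armendariz R -> (gen_right_Baer {poly R} <-> gen_right_Baer R).
Proof.
move=> Ha; split.
- move=> HP X [x Xx].
  pose Y := fun f : {poly R} => exists a, X a /\ f = a%:P.
  have [n [Hn [E [HE HA]]]] := HP Y (ex_intro _ x%:P (ex_intro _ x (conj Xx erefl))).
  exists n; split => //; exists E`_0; split; first by rewrite -coef0M HE.
  move=> a; split.
  + move=> Hra.
    have : right_ann (set_pow Y n) a%:P.
      move=> F [fs [Hsz Hfs ->]].
      have Efs : fs = map polyC (map (fun f : {poly R} => f`_0) fs).
        rewrite -map_comp; symmetry; apply: map_id_in => f Hf /=.
        by have [b [_ ->]] := Hfs f Hf; rewrite coefC.
      rewrite Efs big_map prod_polyC -polyCM Hra ?polyC0 //.
      exists (map (fun f : {poly R} => f`_0) fs); split => //; first by rewrite size_map.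
      move=> b /mapP [f Hf ->]; have [c [Xc ->]] := Hfs f Hf; by rewrite coefC.
    case/HA => h Eh; exists h`_0; by rewrite -coef0M -Eh coefC.
  + move=> [b ->] p [s [Hsz Hs ->]].
    have HE0 : right_ann (set_pow Y n) E by apply/HA; exists 1; rewrite mulr1.
    have := HE0 (\prod_(a <- map polyC s) a).
    rewrite big_map prod_polyC => H.
    have {H} := H (ex_intro _ (map polyC s) (And3 _ _ _)).
    rewrite size_map Hsz big_map prod_polyC => H.
    have {}H := H erefl.
    have H' : (\prod_(i <- s) i)%:P * E = 0.
      apply: H => // f /mapP [c Hc ->]; exists c; split => //; exact: Hs.
    have := congr1 (fun q : {poly R} => q`_0) H'.
    rewrite /= coefCM coef0 => H0; by rewrite mulrA H0 mul0r.
- move=> HR Y [y Yy].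
  pose C := fun a : R => exists f i, Y f /\ a = f`_i.
  have [n [Hn [e [He HA]]]] := HR C (ex_intro _ y`_0 (ex_intro _ y (ex_intro _ 0%N (conj Yy erefl)))).
  exists n; split => //; exists e%:P; split; first by rewrite -polyCM He.
  move=> g; split.
  + move=> Hg.
    have Hj : forall j, exists b, g`_j = e * b.
      move=> j; apply/HA => p [s [Hsz Hs ->]].
      have [fs [Hc HY]] := crel_build Hs.
      apply: (lemA Ha _ Hc); apply: Hg; exists fs; split => //.
      by rewrite -(crel_size Hc).
    exists g; apply/polyP => j; rewrite coefCM.
    by have [b ->] := Hj j; rewrite mulrA He.
  + move=> [h ->] F [fs [Hsz Hfs ->]].
    have He0 : right_ann (set_pow C n) e by apply/HA; exists 1; rewrite mulr1.
    rewrite mulrA lemQ ?mul0r // => s Hs; apply: He0.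
    exists s; split => //; first by rewrite (crel_size Hs).
    move=> a Has; have [f Hf [i ->]] := crel_mem Hs Has.
    exists f, i; split => //; exact: Hfs.
Qed.
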